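(* Let $k$ be an algebraically closed field of characteristic zero, $A=k[x,y]$, $\mathfrak m=(x,y)$. Let $M$ be an $A$-module of length $4$ supported at $\mathfrak m$ with $\dim_k M/\mathfrak m M=3$. Then either $M\cong k\oplus (A/\mathfrak m^2)^\ast$, or $M\cong k^2\oplus\mathscr O_Z$, where $k=A/\mathfrak m$ and $\mathscr O_Z=A/I$ is the structure sheaf of a length-$2$ subscheme $Z\subset\mathbb A^2$ supported at the origin.
   Context: $(A/\mathfrak m^2)^\ast=\operatorname{Hom}_k(A/\mathfrak m^2,k)$ with $A$-action $(a\cdot\varphi)(m)=\varphi(am)$. *)

(* Defs.v *)
From HB Require Import structures.
From mathcomp Require Import all_boot all_order all_algebra.
Set Implicit Arguments. Unset Strict Implicit. Unset Printing Implicit Defensive.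
Import Order.TTheory GRing.Theory Num.Theory.
Local Open Scope ring_scope.

(* A module over A = k[x,y] whose underlying k-space is finite dimensional:
   the space of row vectors 'rV[k]_n, with x and y acting (on the right)
   by two commuting matrices: x.v = v *m actX, y.v = v *m actY. *)
Record kxy_mod (k : fieldType) := KxyMod {
  mdim : nat;
  actX : 'M[k]_mdim;
  actY : 'M[k]_mdim;
  act_comm : actX *m actY = actY *m actX }.

Section Defs.
Variable k : fieldType.

Definition is_submod (M : kxy_mod k) (U : 'M[k]_(mdim M)) : bool :=
  (U *m actX M <= U)%MS && (U *m actY M <= U)%MS.

Definition has_length (M : kxy_mod k) (l : nat) : Prop :=
  exists U : nat -> 'M[k]_(mdim M),
    U 0%N = 0 /\ (U l == (1%:M : 'M[k]_(mdim M)))%MS /\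
    (forall i, (i <= l)%N -> is_submod (U i)) /\
    (forall i, (i < l)%N ->
       (U i < U i.+1)%MS /\
       forall W : 'M[k]_(mdim M), is_submod W ->
          (U i <= W)%MS -> (W <= U i.+1)%MS ->
          (W == U i)%MS || (W == U i.+1)%MS).

(* Supported at m = (x,y): m^N M = 0 for some N, i.e. every monomial
   x^i y^(N-i) of degree N acts as zero. *)
Definition supported_at_m (M : kxy_mod k) : Prop :=
  exists N : nat, forall i, (i <= N)%N ->
    actX M ^+ i *m actY M ^+ (N - i) = 0.

(* dim_k M/mM, where mM = xM + yM *)
Definition top_dim (M : kxy_mod k) : nat :=
  (mdim M - \rank (actX M + actY M)%MS)%N.

Definition mod_iso (M N : kxy_mod k) : Prop :=
  exists P : 'M[k]_(mdim M, mdim N),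
    [/\ row_free P, row_full P,
        actX M *m P = P *m actX N & actY M *m P = P *m actY N].

Definition cyclic_mod (M : kxy_mod k) : Prop :=
  exists v : 'rV[k]_(mdim M), forall W : 'M[k]_(mdim M),
    is_submod W -> (v <= W)%MS -> ((1%:M : 'M[k]_(mdim M)) <= W)%MS.

Lemma dsum_comm (M N : kxy_mod k) :
  block_mx (actX M) 0 0 (actX N) *m block_mx (actY M) 0 0 (actY N)
  = block_mx (actY M) 0 0 (actY N) *m block_mx (actX M) 0 0 (actX N).
Proof.
by rewrite !mulmx_block !mulmx0 !mul0mx !addr0 !add0r !act_comm.
Qed.

Definition dsum (M N : kxy_mod k) : kxy_mod k :=
  @KxyMod k (mdim M + mdim N)%N _ _ (dsum_comm M N).

Lemma dual_comm (M : kxy_mod k) :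
  (actX M)^T *m (actY M)^T = (actY M)^T *m (actX M)^T.
Proof. by rewrite -!trmx_mul act_comm. Qed.

(* the dual Hom_k(M,k) with (a.phi)(m) = phi(a m): representing phi by the
   column vector c with phi(v) = v *m c, we get a.phi = (X *m c), i.e. as a
   row vector c^T *m X^T. *)
Definition dual_mod (M : kxy_mod k) : kxy_mod k :=
  @KxyMod k (mdim M) _ _ (dual_comm M).

Lemma zero_comm : (0 : 'M[k]_1) *m (0 : 'M[k]_1) = (0 : 'M[k]_1) *m (0 : 'M[k]_1).
Proof. by []. Qed.

Definition k_mod : kxy_mod k := @KxyMod k 1 0 0 zero_comm.

Definition m2X : 'M[k]_3 := delta_mx (inord 0) (inord 1).
Definition m2Y : 'M[k]_3 := delta_mx (inord 0) (inord 2).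

Lemma m2_comm : m2X *m m2Y = m2Y *m m2X.
Proof.
rewrite /m2X /m2Y !mul_delta_mx_cond.
have -> : ((inord 1 : 'I_3) == inord 0) = false.
  by apply/negbTE; apply/eqP => /(congr1 val); rewrite /= !inordK.
have -> : ((inord 2 : 'I_3) == inord 0) = false.
  by apply/negbTE; apply/eqP => /(congr1 val); rewrite /= !inordK.
by [].
Qed.

(* A/m^2 in the basis (1, x, y): x.1 = x, y.1 = y, all other products 0 *)
Definition Am2_mod : kxy_mod k := @KxyMod k 3 m2X m2Y m2_comm.

End Defs.

(* Main.v *)
Require Import Defs.
From HB Require Import structures.
From mathcomp Require Import all_boot all_order all_algebra.
From mathcomp Require Import zify.
Import Order.TTheory GRing.Theory Num.Theory.
Local Open Scope ring_scope.
Set Implicit Arguments. Unset Strict Implicit. Unset Printing Implicit Defensive.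

Section Gen.
Variable k : fieldType.

Lemma XYcomm (M : kxy_mod k) : GRing.comm (actY M) (actX M).
Proof. by rewrite /GRing.comm -!mulmxE act_comm. Qed.

Lemma mono_shiftX (M : kxy_mod k) i j :
  actX M *m (actX M ^+ i *m actY M ^+ j) = actX M ^+ i.+1 *m actY M ^+ j.
Proof. by rewrite !mulmxE mulrA -exprS. Qed.

Lemma mono_shiftY (M : kxy_mod k) i j :
  actY M *m (actX M ^+ i *m actY M ^+ j) = actX M ^+ i *m actY M ^+ j.+1.
Proof. by rewrite !mulmxE mulrA (commrX i (XYcomm M)) -mulrA -exprS. Qed.

Lemma socle_aux (M : kxy_mod k) (U V : 'M[k]_(mdim M)) :
  is_submod U -> is_submod V ->
  forall d (v : 'rV_(mdim M)), (v <= V)%MS -> ~~ (v <= U)%MS ->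
  (forall i, (i <= d)%N -> v *m (actX M ^+ i *m actY M ^+ (d - i)) = 0) ->
  exists2 u : 'rV_(mdim M), (u <= V)%MS &
    [&& ~~ (u <= U)%MS, (u *m actX M <= U)%MS & (u *m actY M <= U)%MS].
Proof.
move=> sU /andP[sVX sVY]; elim=> [|d IH] v vV vU H.
  move: (H 0%N (leqnn 0)); rewrite !expr0 mulmx1 mulmx1 => v0.
  by rewrite v0 sub0mx in vU.
case: (boolP (v *m actX M <= U)%MS) => hx.
  case: (boolP (v *m actY M <= U)%MS) => hy.
    by exists v => //; rewrite vU hx hy.
  apply: (IH (v *m actY M)) => //.
    exact: (submx_trans (submxMr _ vV) sVY).
  move=> i hi; rewrite -mulmxA mono_shiftY -subSn //; apply: H.
  exact: leqW.
apply: (IH (v *m actX M)) => //.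
  exact: (submx_trans (submxMr _ vV) sVX).
move=> i hi; rewrite -mulmxA mono_shiftX.
by have := H i.+1 hi; rewrite subSS.
Qed.

Lemma socle (M : kxy_mod k) (U V : 'M[k]_(mdim M)) :
  supported_at_m M -> is_submod U -> is_submod V -> ~~ (V <= U)%MS ->
  exists2 u : 'rV_(mdim M), (u <= V)%MS &
    [&& ~~ (u <= U)%MS, (u *m actX M <= U)%MS & (u *m actY M <= U)%MS].
Proof.
case=> N HN sU sV /row_subPn [i hi].
apply: (socle_aux sU sV (d:=N) (row_sub i V) hi) => j hj.
by rewrite HN // mulmx0.
Qed.

Lemma step_rank (M : kxy_mod k) (U V : 'M[k]_(mdim M)) :
  supported_at_m M -> is_submod U -> is_submod V -> (U < V)%MS ->
  (forall W : 'M[k]_(mdim M), is_submod W -> (U <= W)%MS -> (W <= V)%MS ->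
     (W == U)%MS || (W == V)%MS) ->
  \rank V = (\rank U).+1.
Proof.
move=> supp sU sV ltUV Hmin.
have := ltUV; rewrite ltmxE => /andP[UV nVU].
have [u uV /and3P [uU uXU uYU]] := socle supp sU sV nVU.
have sW : is_submod (U + u)%MS.
  case/andP: sU => sUX sUY.
  apply/andP; split; rewrite addsmxMr addsmx_sub.
    by rewrite !(submx_trans _ (addsmxSl U u)).
  by rewrite !(submx_trans _ (addsmxSl U u)).
have hWV : (U + u <= V)%MS by rewrite addsmx_sub UV uV.
have := Hmin _ sW (addsmxSl U u) hWV.
case/orP => [/eqmxP eqWU | /eqmx_rank rWV].
  by move: (addsmxSr U u); rewrite eqWU (negbTE uU).
have h1 := (mxrank_adds_leqif U u).1.
have h2 := rank_leq_row u.
have := ltUV; rewrite ltmxErank => /andP[_ h3].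
lia.
Qed.

Lemma mdim4 (M : kxy_mod k) : supported_at_m M -> has_length M 4 -> mdim M = 4%N.
Proof.
move=> supp [U [U0 [U4 [sub st]]]].
have r : forall i, (i <= 4)%N -> \rank (U i) = i.
  elim=> [|i IH] hi; first by rewrite U0 mxrank0.
  have [lt Hm] := st i hi.
  by rewrite (step_rank supp (sub i (ltnW hi)) (sub i.+1 hi) lt Hm) IH // ltnW.
by have := r 4%N (leqnn _); rewrite (eqmx_rank U4) mxrank1.
Qed.

End Gen.

Section Gen2.
Variable k : fieldType.

Lemma pick_out n m1 m2 (K : 'M[k]_(m1,n)) (B : 'M[k]_(m2,n)) :
  (\rank B < \rank K)%N -> exists2 u : 'rV_n, (u <= K)%MS & ~~ (u <= B)%MS.
Proof.
move=> lt; have : ~~ (K <= B)%MS.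
  by apply: contraL lt => /mxrankS; rewrite leqNgt.
by case/row_subPn => i hi; exists (row i K) => //; exact: row_sub.
Qed.

Lemma row_delta_mul m n (a b : 'I_m) (Q : 'M[k]_(m,n)) (c : k) i :
  row i ((c *: delta_mx a b) *m Q) = if i == a then c *: row b Q else 0.
Proof.
rewrite rowE mulmxA -scalemxAr mul_delta_mx_cond.
case: eqP => _; last by rewrite mulr0n scaler0 mul0mx.
by rewrite mulr1n -scalemxAl -rowE.
Qed.

Lemma no_between n m1 m2 m3 (U : 'M[k]_(m1,n)) (W : 'M[k]_(m2,n)) (V : 'M[k]_(m3,n)) :
  (U <= W)%MS -> (W <= V)%MS -> (\rank V <= (\rank U).+1)%N ->
  (W == U)%MS || (W == V)%MS.
Proof.
move=> UW WV rV.
have e1 := mxrank_leqif_eq UW; have e2 := mxrank_leqif_eq WV.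
case: (eqVneq (\rank U) (\rank W)) => h.
  move: (e1.2); rewrite h eqxx => /esym/andP[a b].
  by rewrite /= a b.
have : \rank W == \rank V by have := e1.1; have := e2.1; lia.
rewrite e2.2 => ->; by rewrite orbT.
Qed.

Lemma lin_out n m (u v : 'rV[k]_n) (B : 'M[k]_(m,n)) (a : k) :
  ~~ (u <= B)%MS -> (v <= B)%MS -> a *: u + v = 0 -> a = 0.
Proof.
move=> uB vB e; apply/eqP; apply: contraNT uB => a0.
have -> : u = (- a^-1) *: v.
  have : a *: u = - v by apply/eqP; rewrite -addr_eq0 e.
  move=> /(congr1 (fun x => a^-1 *: x)); rewrite scalerA mulVf // scale1r => ->.
  by rewrite scalerN scaleNr.
exact: scalemx_sub.
Qed.

Lemma nil_kill n (w : 'rV[k]_n) (Z : 'M[k]_n) N :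
  w != 0 -> Z ^+ N = 0 -> (w *m Z <= w)%MS -> w *m Z = 0.
Proof.
move=> w0 ZN /sub_rVP [g hg].
have e : forall j, w *m Z ^+ j = g ^+ j *: w.
  elim=> [|j IH]; first by rewrite expr0 mulmx1 scale1r.
  by rewrite exprSr -mulmxE mulmxA IH -scalemxAl hg scalerA -exprSr.
have := e N; rewrite ZN mulmx0 => /esym/eqP; rewrite scalemx_eq0 (negbTE w0) orbF.
rewrite expf_eq0 => /andP[_ /eqP g0].
by rewrite hg g0 scale0r.
Qed.

Definition mx4 n (u0 u1 u2 u3 : 'rV[k]_n) : 'M_(4,n) :=
  \matrix_(i < 4) [:: u0; u1; u2; u3]`_i.

Lemma mx4_free n (u0 u1 u2 u3 : 'rV[k]_n) :
  (forall a0 a1 a2 a3 : k, a0 *: u0 + a1 *: u1 + a2 *: u2 + a3 *: u3 = 0 ->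
     [/\ a0 = 0, a1 = 0, a2 = 0 & a3 = 0]) ->
  row_free (mx4 u0 u1 u2 u3).
Proof.
move=> H; rewrite -kermx_eq0; apply/eqP/row_matrixP => i; rewrite row0.
set v := row i _.
have : v *m mx4 u0 u1 u2 u3 = 0 by apply/sub_kermxP; exact: row_sub.
rewrite mulmx_sum_row !big_ord_recl big_ord0 addr0 !rowK /= addrA addrA.
case/H => h0 h1 h2 h3.
clearbody v; apply/rowP => j; rewrite mxE.
case: j => [[|[|[|[|j]]]] hj] //.
- by rewrite -[RHS]h0; congr (v 0 _); apply: val_inj.
- by rewrite -[RHS]h1; congr (v 0 _); apply: val_inj.
- by rewrite -[RHS]h2; congr (v 0 _); apply: val_inj.
- by rewrite -[RHS]h3; congr (v 0 _); apply: val_inj.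
Qed.

Lemma iso_of_basis n (X Y XN YN Q : 'M[k]_n) :
  row_free Q -> Q *m X = XN *m Q -> Q *m Y = YN *m Q ->
  [/\ row_free (invmx Q), row_full (invmx Q),
      X *m invmx Q = invmx Q *m XN & Y *m invmx Q = invmx Q *m YN].
Proof.
rewrite row_free_unit => Qu hX hY.
have gen : forall A B, Q *m A = B *m Q -> A *m invmx Q = invmx Q *m B.
  move=> A B e.
  have : invmx Q *m (Q *m A) *m invmx Q = invmx Q *m (B *m Q) *m invmx Q by rewrite e.
  by rewrite mulKmx // mulmxA mulmxK.
split; rewrite ?row_free_unit ?row_full_unit ?unitmx_inv //; exact: gen.
Qed.

End Gen2.

Section Gen3.
Variable k : fieldType.

Definition o4 (i : nat) (h : (i < 4)%N) : 'I_4 := Ordinal h.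
Definition o21 : 'I_2 := @Ordinal 2 1 erefl.
Definition d01 : 'M[k]_2 := delta_mx ord0 o21.

Lemma d01sq : d01 *m d01 = 0.
Proof. by rewrite /d01 mul_delta_mx_cond. Qed.

Lemma dd (a b : k) : (a *: d01) *m (b *: d01) = 0.
Proof. by rewrite -scalemxAl -scalemxAr d01sq !scaler0. Qed.

Lemma oz_comm (a b : k) : (a *: d01) *m (b *: d01) = (b *: d01) *m (a *: d01).
Proof. by rewrite !dd. Qed.

Definition mkOZ (a b : k) : kxy_mod k := @KxyMod k 2 _ _ (oz_comm a b).

Lemma OZ_supp a b : supported_at_m (mkOZ a b).
Proof.
exists 2%N => i hi /=.
have e : forall c d : k, (c *: d01) * (d *: d01) = 0 by move=> c d; rewrite -mulmxE dd.
case: i hi => [|[|[|i]]] //= _.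
- by rewrite (_ : (2 - 0 = 2)%N) // expr0 mul1mx expr2 e.
- by rewrite (_ : (2 - 1 = 1)%N) // !expr1 mulmxE e.
- by rewrite (_ : (2 - 2 = 0)%N) // expr0 mulmx1 expr2 e.
Qed.

Lemma OZ_cyclic a b : (a != 0) || (b != 0) -> cyclic_mod (mkOZ a b).
Proof.
move=> ab; exists (delta_mx 0 ord0) => W /andP[/= WX WY] vW.
have e0 : forall c : k, (delta_mx 0 ord0 : 'rV_2) *m (c *: d01) = c *: delta_mx 0 o21.
  by move=> c; rewrite -scalemxAr /d01 mul_delta_mx.
have e1 : forall c : k, c != 0 -> ((c *: delta_mx 0 o21 : 'rV_2) <= W)%MS ->
    ((delta_mx 0 o21 : 'rV_2) <= W)%MS.
  by move=> c c0 h; rewrite -[delta_mx _ _](scalerK c0) scalemx_sub.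
have e2 : ((delta_mx 0 o21 : 'rV_2) <= W)%MS.
  case/orP: ab => [a0|b0].
    apply: (e1 a a0); rewrite -e0.
    exact: submx_trans (submxMr _ vW) WX.
  apply: (e1 b b0); rewrite -e0.
  exact: submx_trans (submxMr _ vW) WY.
apply/row_subP => i; rewrite row1.
case: i => [[|[|i]] hi] //.
all: first [by rewrite (_ : Ordinal hi = ord0) //; apply: val_inj
           | by rewrite (_ : Ordinal hi = o21) //; apply: val_inj].
Qed.

Lemma OZ_len a b : has_length (mkOZ a b) 2.
Proof.
exists (fun i => match i return 'M[k]_2 with 0%N => 0 | 1%N => d01 | _ => 1%:M end).
split => //; split; first by rewrite !submx_refl.
split.
  case=> [|[|[|i]]] //= _; rewrite /is_submod /=.
  - by rewrite !mul0mx !sub0mx.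
  - by rewrite -!scalemxAr d01sq !scaler0 !sub0mx.
  - by rewrite !submx1.
case=> [|[|i]] //= _.
  split; first by rewrite ltmxErank sub0mx mxrank0 /d01 mxrank_delta.
  move=> W _ h1 h2; apply: no_between => //.
  by rewrite mxrank0 /d01 mxrank_delta.
split; first by rewrite ltmxErank submx1 mxrank1 /d01 mxrank_delta.
move=> W _ h1 h2; apply: no_between => //.
by rewrite mxrank1 /d01 mxrank_delta.
Qed.

Lemma XN1 : actX (dsum (k_mod k) (dual_mod (Am2_mod k))) = delta_mx (@o4 2 erefl) (@o4 1 erefl).
Proof.
apply/matrixP => i j; rewrite /= /m2X trmx_delta !mxE.
case: (@splitP 1 3 i) => [i0 Hi|i0 Hi]; rewrite !mxE; case: (@splitP 1 3 j) => [j0 Hj|j0 Hj]; rewrite !mxE /=.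
- by rewrite -(inj_eq val_inj) /= Hi (ord1 i0).
- by rewrite -(inj_eq val_inj) /= Hi (ord1 i0).
- by rewrite -!(inj_eq val_inj) /= Hj (ord1 j0) andbF.
- by rewrite -!(inj_eq val_inj) /= Hi Hj !inordK.
Qed.

Lemma YN1 : actY (dsum (k_mod k) (dual_mod (Am2_mod k))) = delta_mx (@o4 3 erefl) (@o4 1 erefl).
Proof.
apply/matrixP => i j; rewrite /= /m2Y trmx_delta !mxE.
case: (@splitP 1 3 i) => [i0 Hi|i0 Hi]; rewrite !mxE; case: (@splitP 1 3 j) => [j0 Hj|j0 Hj]; rewrite !mxE /=.
- by rewrite -(inj_eq val_inj) /= Hi (ord1 i0).
- by rewrite -(inj_eq val_inj) /= Hi (ord1 i0).
- by rewrite -!(inj_eq val_inj) /= Hj (ord1 j0) andbF.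
- by rewrite -!(inj_eq val_inj) /= Hi Hj !inordK.
Qed.

Lemma XN2 a b : actX (dsum (dsum (k_mod k) (k_mod k)) (mkOZ a b)) = a *: delta_mx (@o4 2 erefl) (@o4 3 erefl).
Proof.
apply/matrixP => i j; rewrite /= block_mx0 /d01 !mxE.
case: (@splitP 2 2 i) => [i0 Hi|i0 Hi]; rewrite !mxE; case: (@splitP 2 2 j) => [j0 Hj|j0 Hj]; rewrite !mxE /=.
- by rewrite -(inj_eq val_inj) /= Hi; case: i0 {Hi} => [[|[|?]] ?]; rewrite /= ?mulr0.
- by rewrite -(inj_eq val_inj) /= Hi; case: i0 {Hi} => [[|[|?]] ?]; rewrite /= ?mulr0.
- by rewrite -[j == _](inj_eq val_inj) /= Hj; case: j0 {Hj} => [[|[|?]] ?]; rewrite /= ?andbF ?mulr0.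
- by rewrite -!(inj_eq val_inj) /= Hi Hj.
Qed.

Lemma YN2 a b : actY (dsum (dsum (k_mod k) (k_mod k)) (mkOZ a b)) = b *: delta_mx (@o4 2 erefl) (@o4 3 erefl).
Proof.
apply/matrixP => i j; rewrite /= block_mx0 /d01 !mxE.
case: (@splitP 2 2 i) => [i0 Hi|i0 Hi]; rewrite !mxE; case: (@splitP 2 2 j) => [j0 Hj|j0 Hj]; rewrite !mxE /=.
- by rewrite -(inj_eq val_inj) /= Hi; case: i0 {Hi} => [[|[|?]] ?]; rewrite /= ?mulr0.
- by rewrite -(inj_eq val_inj) /= Hi; case: i0 {Hi} => [[|[|?]] ?]; rewrite /= ?mulr0.
- by rewrite -[j == _](inj_eq val_inj) /= Hj; case: j0 {Hj} => [[|[|?]] ?]; rewrite /= ?andbF ?mulr0.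
- by rewrite -!(inj_eq val_inj) /= Hi Hj.
Qed.

End Gen3.
Unset Implicit Arguments.
Set Strict Implicit.

Theorem proposition5p1 (k : closedFieldType) (hk : [pchar k] =i pred0)
  (M : kxy_mod k) :
  supported_at_m M -> has_length M 4 -> top_dim M = 3%N ->
  mod_iso M (dsum (k_mod k) (dual_mod (Am2_mod k)))
  \/ exists OZ : kxy_mod k,
       [/\ cyclic_mod OZ, supported_at_m OZ, has_length OZ 2 &
           mod_iso M (dsum (dsum (k_mod k) (k_mod k)) OZ)].
Proof.
move=> supp hl htop.
have n4 := mdim4 supp hl.
case: M supp hl htop n4 => n X Y cXY supp hl htop /= n4; subst n.
case: supp => N HN.
rewrite /top_dim /= in htop.
set S := (X + Y)%MS in htop.
have rS : \rank S = 1%N by have := rank_leq_col S; lia.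
set w := nz_row S.
have w0 : w != 0.
  by rewrite nz_row_eq0; apply/eqP => S0; rewrite S0 mxrank0 in rS.
have Sw : (S <= w)%MS.
  have le := mxrank_leqif_eq (nz_row_sub S).
  by move: (le.2); rewrite rank_rV w0 rS /= => /esym/andP[_ ->].
have Xw : (X <= w)%MS := submx_trans (addsmxSl X Y) Sw.
have Yw : (Y <= w)%MS := submx_trans (addsmxSr X Y) Sw.
have vXw : forall v : 'rV_4, (v *m X <= w)%MS := fun v => submx_trans (submxMl v X) Xw.
have vYw : forall v : 'rV_4, (v *m Y <= w)%MS := fun v => submx_trans (submxMl v Y) Yw.
have XN0 : X ^+ N = 0 by have := HN N (leqnn N); rewrite subnn expr0 mulmx1.
have YN0 : Y ^+ N = 0 by have := HN 0%N (leq0n N); rewrite subn0 expr0 mul1mx.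
have wX : w *m X = 0 := nil_kill w0 XN0 (vXw w).
have wY : w *m Y = 0 := nil_kill w0 YN0 (vYw w).
set R := row_mx X Y.
have vR : forall v : 'rV_4, v *m R = row_mx (v *m X) (v *m Y) by move=> v; rewrite mul_mx_row.
set T1 : 'rV_(4+4) := row_mx w 0.
set T2 : 'rV_(4+4) := row_mx 0 w.
have RT : (R <= T1 + T2)%MS.
  apply/row_subP => i; rewrite rowE vR.
  have [al hal] := sub_rVP (vXw 'e_i); have [be hbe] := sub_rVP (vYw 'e_i).
  rewrite hal hbe (_ : row_mx _ _ = al *: T1 + be *: T2).
    by apply: addmx_sub_adds; apply: scalemx_sub.
  by rewrite /T1 /T2 !scale_row_mx add_row_mx !scaler0 addr0 add0r.
have rT : (\rank (T1 + T2)%MS <= 2)%N.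
  have := (mxrank_adds_leqif T1 T2).1; have := rank_leq_row T1; have := rank_leq_row T2; lia.
set K := kermx R.
have rK : \rank K = (4 - \rank R)%N by rewrite mxrank_ker.
have wK : (w <= K)%MS by apply/sub_kermxP; rewrite vR wX wY row_mx0.
have kerXY : forall v : 'rV_4, (v <= K)%MS -> v *m X = 0 /\ v *m Y = 0.
  by move=> v /sub_kermxP; rewrite vR -row_mx0 => /eq_row_mx.
case: (boolP ((T1 <= R)%MS && (T2 <= R)%MS)) => [/andP[T1R T2R] | nT].
- left.
  have rR := mxrankS RT.
  have [u0 u0K u0w] : exists2 u0 : 'rV_4, (u0 <= K)%MS & ~~ (u0 <= w)%MS.
    by apply: pick_out; rewrite rank_rV w0 rK /=; lia.
  have [D2 hD2] := submxP T1R.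
  have [D3 hD3] := submxP T2R.
  move: hD2 hD3; rewrite !vR /T1 /T2 => /eq_row_mx [D2X D2Y] /eq_row_mx [D3X D3Y].
  have [u0X u0Y] := kerXY u0 u0K.
  have Qf : row_free (mx4 u0 w D2 D3).
    apply: mx4_free => a0 a1 a2 a3 e.
    have := congr1 (mulmx^~ R) e.
    rewrite /= mul0mx !mulmxDl -!scalemxAl !vR u0X u0Y wX wY -D2X -D2Y -D3X -D3Y !row_mx0 !scaler0 !add0r.
    rewrite !scale_row_mx !scaler0 add_row_mx addr0 add0r -row_mx0 => /eq_row_mx [/eqP h2 /eqP h3].
    move: h2 h3; rewrite !scalemx_eq0 (negbTE w0) !orbF => /eqP a20 /eqP a30.
    move: e; rewrite a20 a30 !scale0r !addr0 => e.
    have a00 := lin_out u0w (scalemx_sub a1 (submx_refl w)) e.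
    move: e; rewrite a00 scale0r add0r => /eqP; rewrite scalemx_eq0 (negbTE w0) orbF => /eqP a10.
    by split.
  have QX : mx4 u0 w D2 D3 *m X = delta_mx (@o4 2 erefl) (@o4 1 erefl) *m mx4 u0 w D2 D3.
    apply/row_matrixP => i; rewrite row_mul -[delta_mx _ _]scale1r row_delta_mul /mx4 !rowK.
    case: i => [[|[|[|[|i]]]] hi] //=; rewrite -?(inj_eq val_inj) /= ?scale1r.
    by rewrite -D2X.
  have QY : mx4 u0 w D2 D3 *m Y = delta_mx (@o4 3 erefl) (@o4 1 erefl) *m mx4 u0 w D2 D3.
    apply/row_matrixP => i; rewrite row_mul -[delta_mx _ _]scale1r row_delta_mul /mx4 !rowK.
    case: i => [[|[|[|[|i]]]] hi] //=; rewrite -?(inj_eq val_inj) /= ?scale1r //.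
  have [h1 h2 h3 h4] := iso_of_basis Qf QX QY.
  exists (invmx (mx4 u0 w D2 D3)); split => //; [by rewrite XN1 | by rewrite YN1].
- right.
  have nRT : ~~ (R == (T1 + T2))%MS.
    apply: contra nT => /andP[_ TR].
    by rewrite (submx_trans (addsmxSl T1 T2) TR) (submx_trans (addsmxSr T1 T2) TR).
  have le := mxrank_leqif_eq RT.
  have rR : (\rank R < \rank (T1 + T2)%MS)%N by rewrite ltn_neqAle le.2 nRT (mxrankS RT).
  clear le.
  have rR1 : (\rank R <= 1)%N := leq_trans rR rT.
  have R0 : R != 0.
    apply/eqP => R0; move: R0; rewrite /R -row_mx0 => /eq_row_mx [X0 Y0].
    by move: rS; rewrite /S X0 Y0 addsmx0 mxrank0.
  have : ~~ (R <= (0 : 'M[k]_(4+4)))%MS by rewrite submx0.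
  case/row_subPn => i; rewrite submx0 rowE => uR0.
  set u : 'rV_4 := 'e_i in uR0.
  have [al hal] := sub_rVP (vXw u); have [be hbe] := sub_rVP (vYw u).
  have ab : (al != 0) || (be != 0).
    apply: contraNT uR0; rewrite negb_or !negbK => /andP[/eqP a0 /eqP b0].
    by rewrite vR hal hbe a0 b0 !scale0r row_mx0.
  have [u0 u0K u0w] : exists2 u0 : 'rV_4, (u0 <= K)%MS & ~~ (u0 <= w)%MS.
    by apply: pick_out; rewrite rank_rV w0 rK /=; move: rR1; clear; lia.
  have [u1 u1K u1w] : exists2 u1 : 'rV_4, (u1 <= K)%MS & ~~ (u1 <= w + u0)%MS.
    apply: pick_out; rewrite rK; have := (mxrank_adds_leqif w u0).1.
    have := rank_leq_row w; have := rank_leq_row u0; move: rR1; clear; lia.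
  have [u0X u0Y] := kerXY u0 u0K.
  have [u1X u1Y] := kerXY u1 u1K.
  exists (mkOZ al be); split; [exact: OZ_cyclic | exact: OZ_supp | exact: OZ_len | ].
  have Qf : row_free (mx4 u0 u1 u w).
    apply: mx4_free => a0 a1 a2 a3 e.
    have := congr1 (mulmx^~ R) e.
    rewrite /= mul0mx !mulmxDl -!scalemxAl [u0 *m R]vR [u1 *m R]vR [w *m R]vR u0X u0Y u1X u1Y wX wY !row_mx0 !scaler0 !add0r addr0 => /eqP.
    rewrite scalemx_eq0 (negbTE uR0) orbF => /eqP a20.
    move: e; rewrite a20 scale0r addr0 => e.
    have e1 : a1 *: u1 + (a0 *: u0 + a3 *: w) = 0 by rewrite addrA (addrC (a1 *: u1)).
    have a10 := lin_out u1w (addmx_sub (scalemx_sub a0 (addsmxSr w u0)) (scalemx_sub a3 (addsmxSl w u0))) e1.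
    move: e; rewrite a10 scale0r addr0 => e.
    have a00 := lin_out u0w (scalemx_sub a3 (submx_refl w)) e.
    move: e; rewrite a00 scale0r add0r => /eqP; rewrite scalemx_eq0 (negbTE w0) orbF => /eqP a30.
    by split.
  have QX : mx4 u0 u1 u w *m X = (al *: delta_mx (@o4 2 erefl) (@o4 3 erefl)) *m mx4 u0 u1 u w.
    apply/row_matrixP => i0; rewrite row_mul row_delta_mul /mx4 !rowK.
    case: i0 => [[|[|[|[|i0]]]] hi] //=; rewrite -?(inj_eq val_inj) /= //.
  have QY : mx4 u0 u1 u w *m Y = (be *: delta_mx (@o4 2 erefl) (@o4 3 erefl)) *m mx4 u0 u1 u w.
    apply/row_matrixP => i0; rewrite row_mul row_delta_mul /mx4 !rowK.
    case: i0 => [[|[|[|[|i0]]]] hi] //=; rewrite -?(inj_eq val_inj) /= //.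
  have [h1 h2 h3 h4] := iso_of_basis Qf QX QY.
  exists (invmx (mx4 u0 u1 u w)); split => //; [by rewrite XN2 | by rewrite YN2].
Qed.
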